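(* Let $m,n\ge1$ and let $a_{ij}\ge1$ be real numbers ($1\le i\le n$, $1\le j\le m$). Then $$\prod_{i=1}^n\Bigl\{\prod_{j=1}^ma_{ij}-\prod_{j=1}^m(a_{ij}-1)\Bigr\}\ \ge\ \prod_{j=1}^m\prod_{i=1}^na_{ij}-\prod_{j=1}^m\Bigl(\prod_{i=1}^na_{ij}-1\Bigr).$$ Equality holds if and only if one of the following holds: (i) $m=1$ or $n=1$; (ii) there is $j$ with $a_{ij}=1$ for all $i$; (iii) there is $i_0$ with $a_{ij}=1$ for all $i\ne i_0$ and all $j$. *)

(* Defs.v *)
From mathcomp Require Import all_boot all_order all_algebra.
From mathcomp Require Import reals.

(* Main.v *)
Require Import Defs.
From mathcomp Require Import all_boot all_order all_algebra.
From mathcomp Require Import reals.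
Import Order.TTheory GRing.Theory Num.Theory.
Local Open Scope ring_scope.

Section S.
Variable R : realType.

Lemma expand (I : finType) (F : I -> R) :
  \prod_i (F i + 1) = \sum_(t : {ffun I -> bool}) \prod_i (if t i then F i else 1).
Proof.
rewrite -(bigA_distr_bigA (fun i (b : bool) => if b then F i else 1)) /=.
by apply: eq_bigr => i _; rewrite big_bool.
Qed.

Lemma expand1 (I : finType) (F : I -> R) :
  \prod_i (F i + 1) - 1 = \sum_(t : {ffun I -> bool} | t != [ffun=> false]) \prod_i (if t i then F i else 1).
Proof.
rewrite expand (bigD1 [ffun=> false]) //= big1 ?(addrC 1) ?addrK // => i _.
by rewrite ffunE.
Qed.

Lemma expand2 (I : finType) (F : I -> R) :
  \prod_i (F i + 1) - \prod_i F i = \sum_(t : {ffun I -> bool} | t != [ffun=> true]) \prod_i (if t i then F i else 1).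
Proof.
rewrite expand (bigD1 [ffun=> true]) //=.
rewrite (eq_bigr F); last by move=> i _; rewrite ffunE.
by rewrite addrC addrK.
Qed.

Variables (n m : nat) (x : 'I_n -> 'I_m -> R).
Hypothesis x_ge0 : forall i j, 0 <= x i j.

Definition V (g : {ffun 'I_m -> {ffun 'I_n -> bool}}) :=
  \prod_j \prod_i (if g j i then x i j else 1).

Lemma V_ge0 g : 0 <= V g.
Proof. by apply: prodr_ge0 => j _; apply: prodr_ge0 => i _; case: ifP. Qed.

Definition Pg (g : {ffun 'I_m -> {ffun 'I_n -> bool}}) := [forall i, [exists j, ~~ g j i]].
Definition Qn (g : {ffun 'I_m -> {ffun 'I_n -> bool}}) := g \in ffun_on (predC1 [ffun=> false]).

Lemma factA : \prod_j \prod_i (x i j + 1) = \sum_g V g.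
Proof.
rewrite (eq_bigr (fun j => \sum_(t : {ffun 'I_n -> bool}) \prod_i (if t i then x i j else 1))).
  by rewrite bigA_distr_bigA.
by move=> j _; rewrite expand.
Qed.

Lemma factB : \prod_j (\prod_i (x i j + 1) - 1) = \sum_(g | Qn g) V g.
Proof.
rewrite (eq_bigr (fun j => \sum_(t : {ffun 'I_n -> bool} | predC1 [ffun=> false] t) \prod_i (if t i then x i j else 1))).
  by rewrite bigA_distr_big.
by move=> j _; rewrite expand1.
Qed.

Definition tr (g : {ffun 'I_m -> {ffun 'I_n -> bool}}) : {ffun 'I_n -> {ffun 'I_m -> bool}} :=
  [ffun i => [ffun j => g j i]].
Definition tr' (h : {ffun 'I_n -> {ffun 'I_m -> bool}}) : {ffun 'I_m -> {ffun 'I_n -> bool}} :=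
  [ffun j => [ffun i => h i j]].

Lemma trK : cancel tr tr'.
Proof. by move=> g; apply/ffunP => j; apply/ffunP => i; rewrite !ffunE. Qed.
Lemma trK' : cancel tr' tr.
Proof. by move=> g; apply/ffunP => j; apply/ffunP => i; rewrite !ffunE. Qed.

Lemma factC : \prod_i (\prod_j (x i j + 1) - \prod_j x i j) = \sum_(g | Pg g) V g.
Proof.
rewrite (eq_bigr (fun i => \sum_(t : {ffun 'I_m -> bool} | predC1 [ffun=> true] t) \prod_j (if t j then x i j else 1))); last first.
  by move=> i _; rewrite expand2.
rewrite bigA_distr_big (reindex tr); last by exists tr' => g _; rewrite ?trK ?trK'.
apply: eq_big => g.
  apply/ffun_onP/forallP => H i.
    have := H i; rewrite !inE; apply: contraR; rewrite negb_exists => /forallP K.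
    by apply/eqP/ffunP => j; rewrite !ffunE; have := K j; rewrite negbK.
  rewrite !inE; case/existsP: (H i) => j Hj; apply/eqP => /ffunP /(_ j).
  by rewrite !ffunE => E; rewrite E in Hj.
move=> _; rewrite /V exchange_big /=; apply: eq_bigr => j _; apply: eq_bigr => i _.
by rewrite !ffunE.
Qed.

Lemma diffE : \sum_(g | Pg g) V g - (\sum_g V g - \sum_(g | Qn g) V g) =
  \sum_(g | Pg g && Qn g) V g.
Proof.
have -> : \sum_g V g - \sum_(g | Qn g) V g = \sum_(g | ~~ Qn g) V g.
  by rewrite (bigID Qn predT) /= [X in X - _]addrC addrK.
rewrite (bigID Qn Pg) /=.
rewrite [X in _ + X - _](eq_bigl (fun g => ~~ Qn g)) ?addrK // => g.
apply/andP/idP => [[]//|nQ]; split=> //.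
apply/forallP => i.
move: nQ; apply: contraNT; rewrite negb_exists => /forallP K.
apply/ffun_onP => j; rewrite !inE; apply/eqP => /ffunP /(_ i).
by rewrite ffunE => E; have := K j; rewrite E.
Qed.

Lemma Qn_ex (g : {ffun 'I_m -> {ffun 'I_n -> bool}}) j : Qn g -> exists i, g j i.
Proof.
move/ffun_onP/(_ j); rewrite !inE => H.
apply/existsP; apply: contraNT H; rewrite negb_exists => /forallP K.
by apply/eqP/ffunP => i; rewrite ffunE; apply/negbTE.
Qed.

Lemma Vzero (g : {ffun 'I_m -> {ffun 'I_n -> bool}}) j i : g j i -> x i j = 0 -> V g = 0.
Proof.
move=> gji x0; rewrite /V (bigD1 j) //= (bigD1 i) //= gji x0.
by rewrite !mul0r.
Qed.

End S.
Arguments V {R n m} x g.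
Arguments Pg {n m} g.
Arguments Qn {n m} g.
Arguments factA {R n m} x.
Arguments factB {R n m} x.
Arguments factC {R n m} x.
Arguments diffE {R n m} x.
Arguments V_ge0 {R n m} x x_ge0 g.
Arguments Qn_ex {n m} g j.
Arguments Vzero {R n m} x g j i.
From Stdlib Require Import Classical.

Theorem mainTheorem3 (R : realType) (m n : nat) (hm : (1 <= m)%N) (hn : (1 <= n)%N)
  (a : 'I_n -> 'I_m -> R) (ha : forall i j, 1 <= a i j) :
  let LHS := \prod_(i < n) (\prod_(j < m) a i j - \prod_(j < m) (a i j - 1)) in
  let RHS := \prod_(j < m) (\prod_(i < n) a i j)
             - \prod_(j < m) (\prod_(i < n) a i j - 1) in
  LHS >= RHS /\
  (LHS = RHS <->
     (m = 1%N \/ n = 1%N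
      \/ (exists j : 'I_m, forall i : 'I_n, a i j = 1)
      \/ (exists i0 : 'I_n, forall (i : 'I_n) (j : 'I_m), i != i0 -> a i j = 1))).
Proof.
move=> LHS RHS.
pose x i j := a i j - 1.
have x0 : forall i j, 0 <= x i j by move=> i j; rewrite /x subr_ge0.
have HL : LHS = \sum_(g | Pg g) V x g.
  rewrite -factC; apply: eq_bigr => i _; congr (_ - _).
  by apply: eq_bigr => j _; rewrite /x subrK.
have HR : RHS = \sum_g V x g - \sum_(g | Qn g) V x g.
  rewrite -factA -factB; congr (_ - _).
    by apply: eq_bigr => j _; apply: eq_bigr => i _; rewrite /x subrK.
  by apply: eq_bigr => j _; congr (_ - _); apply: eq_bigr => i _; rewrite /x subrK.
have HD : LHS - RHS = \sum_(g | Pg g && Qn g) V x g by rewrite HL HR diffE.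
have Dge0 : 0 <= LHS - RHS by rewrite HD; apply: sumr_ge0 => g _; apply: V_ge0.
split; first by rewrite -subr_ge0.
have key : LHS = RHS <-> forall g, Pg g && Qn g -> V x g = 0.
  split.
    move=> E g Hg.
    have Z : \sum_(g | Pg g && Qn g) V x g = 0 by rewrite -HD E subrr.
    by apply: (psumr_eq0P _ Z Hg) => h _; apply: V_ge0.
  move=> H; apply/eqP; rewrite -subr_eq0 HD; apply/eqP; exact: big1.
rewrite key; split; last first.
  move=> [m1|[n1|[[j0 Hj]|[i0 Hi]]]] g /andP[Pgg Qg].
  - subst m; have [i gi] := Qn_ex g ord0 Qg.
    move: Pgg; rewrite /Pg => /forallP /(_ i) /existsP [j]; by rewrite [j]ord1 gi.
  - have E : forall u v : 'I_n, u = v.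
      move=> u v; apply: val_inj.
      have : (val u < 1)%N by rewrite -n1 ltn_ord.
      have : (val v < 1)%N by rewrite -n1 ltn_ord.
      by rewrite !ltnS !leqn0 => /eqP -> /eqP ->.
    move: Pgg; rewrite /Pg => /forallP /(_ (Ordinal hn)) /existsP [j gj].
    have [i gi] := Qn_ex g j Qg.
    by move: gj; rewrite (E (Ordinal hn) i) gi.
  - have [i gi] := Qn_ex g j0 Qg.
    by apply: (Vzero x g j0 i gi); rewrite /x Hj subrr.
  - move: Pgg; rewrite /Pg => /forallP /(_ i0) /existsP [j gj].
    have [i gi] := Qn_ex g j Qg.
    apply: (Vzero x g j i gi); rewrite /x Hi ?subrr //.
    by apply: contraNneq gj => <-.
move=> H; apply: NNPP => Hn.
apply not_or_and in Hn as [Hm1 Hn].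
apply not_or_and in Hn as [Hn1 Hn].
apply not_or_and in Hn as [Hc Hr].
have xpos : forall i j, a i j <> 1 -> 0 < x i j.
  move=> i j ne; rewrite lt_neqAle x0 andbT eq_sym subr_eq0; exact/eqP.
have col : forall j, exists i, 0 < x i j.
  move=> j; apply: NNPP => K; apply: Hc; exists j => i; apply: NNPP => K2.
  by apply: K; exists i; apply: xpos.
have row : forall i0, exists i j, i != i0 /\ 0 < x i j.
  move=> i0; apply: NNPP => K; apply: Hr; exists i0 => i j ne; apply: NNPP => K2.
  by apply: K; exists i, j; split => //; apply: xpos.
have [r Hr'] := fin_all_exists col.
have m2 : (1 < m)%N by rewrite ltn_neqAle hm andbT; apply/eqP => E; apply: Hm1.
have [i1 [c1 [_ H1]]] := row (Ordinal hn).
have [i2 [c2 [ne12 H2]]] := row i1.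
have [j1 [j2 [k1 [k2 [nj [nk [Hk1 Hk2]]]]]]] : exists j1 j2 k1 k2,
    j1 != j2 /\ k1 != k2 /\ 0 < x k1 j1 /\ 0 < x k2 j2.
  case: (eqVneq c1 c2) => [E|ne]; last by exists c1, c2, i1, i2; rewrite ne eq_sym ne12.
  have [k nk] : exists k : 'I_m, k != c1.
    exists (if val c1 == 0%N then Ordinal m2 else Ordinal hm).
    case: (eqVneq (val c1) 0%N) => E'.
      apply/eqP => E3; have := congr1 val E3 => /=.
      by rewrite E'.
    apply/eqP => E3; have := congr1 val E3 => /= E2.
    by move/eqP: E'; apply; exact: (esym E2).
  case: (eqVneq (r k) i1) => [Ek|nek].
    exists c1, k, i2, (r k); rewrite eq_sym nk Ek ne12 E; do !split => //.
    by rewrite -Ek.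
  by exists c1, k, i1, (r k); rewrite eq_sym nk eq_sym nek.
pose rho j := if j == j1 then k1 else if j == j2 then k2 else r j.
have Hrho : forall j, 0 < x (rho j) j.
  move=> j; rewrite /rho; case: eqP => [->//|_]; case: eqP => [->//|_]; exact: Hr'.
pose g : {ffun 'I_m -> {ffun 'I_n -> bool}} := [ffun j => [ffun i => i == rho j]].
have Pgg : Pg g.
  apply/forallP => i; apply/existsP; case: (eqVneq i k1) => [->|ne].
    by exists j2; rewrite !ffunE /rho (eq_sym j2 j1) (negbTE nj) eqxx.
  by exists j1; rewrite !ffunE /rho eqxx.
have Qg : Qn g.
  apply/ffun_onP => j; rewrite !inE; apply/eqP => /ffunP /(_ (rho j)).
  by rewrite !ffunE eqxx.
have Vpos : 0 < V x g.
  rewrite /V; apply: prodr_gt0 => j _; rewrite (bigD1 (rho j)) //= big1 ?mulr1.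
    by rewrite !ffunE eqxx.
  by move=> i ne; rewrite !ffunE (negbTE ne).
by move: Vpos; rewrite H ?ltxx // Pgg Qg.
Qed.
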